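(* Let $A$ be a nicely essential subring of a ring $S$. Then: (a) If $L,L'$ are left ideals of $A$ with $L\cap L'=0$, then $SL\cap SL'=0$; moreover $\operatorname{udim}(S)=\operatorname{udim}(A)$. Also $\mathcal Z(A)=A\cap\mathcal Z(S)$, and $\mathcal Z(A)$ is a nicely essential left $A$-submodule of $\mathcal Z(S)$ (i.e. for every finite set $E$ of non-zero elements of $\mathcal Z(S)$ there is $a\in A$ with $0\ne ax\in\mathcal Z(A)$ for all $x\in E$). (b) Let $L\subseteq S$ be any non-zero left $A$-submodule. Then the left ideal $A\cap L$ of $A$ is uniform (respectively, essential) in $A$ if and only if the left ideal $SL$ of $S$ is uniform (respectively, essential) in $S$.
   Context: A subring $A$ of a ring $S$ (same identity) is a nicely essential subring if for every finite set $E\subseteq S$ of non-zero elements there exists $a\in A$ with $0\neq ax\in A$ for all $x\in E$. $\operatorname{udim}$ of a ring denotes its left uniform dimension (supremum of cardinals $\mathfrak N$ such that the ring contains a direct sum of $\mathfrak N$ non-zero left ideals; possibly infinite). For a ring $B$, $\mathcal Z(B)$ is the left singular ideal: the set of $x\in B$ whose left annihilator $\{b\in B: bx=0\}$ contains an essential left ideal of $B$. For a subset $L\subseteq S$, $SL$ is the additive subgroup generated by products $sl$. *)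

(* Defs.v *)
From mathcomp Require Import all_boot all_order all_algebra.
Set Implicit Arguments. Unset Strict Implicit. Unset Printing Implicit Defensive.
Import GRing.Theory.
Local Open Scope ring_scope.

(* A subring A of S (same
   identity) is handled as a subset of S; the ring A is A with the operations
   of S.  Notions "of the ring R" below are relative to a subset R of S
   (R = fun _ => True for S itself). *)

Section Defs.
Variable S : pzRingType.

Definition is_subring (A : S -> Prop) : Prop :=
  A 1 /\ (forall x y, A x -> A y -> A (x - y)) /\
  (forall x y, A x -> A y -> A (x * y)).

Definition nicely_essential_subring (A : S -> Prop) : Prop :=
  is_subring A /\
  forall E : seq S, (forall x, x \in E -> x != 0) ->
    exists2 a, A a & forall x, x \in E -> a * x != 0 /\ A (a * x).

Definition left_submodule (R L : S -> Prop) : Prop :=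
  L 0 /\ (forall x y, L x -> L y -> L (x + y)) /\
  (forall r x, R r -> L x -> L (r * x)).

Definition left_ideal (R L : S -> Prop) : Prop :=
  (forall x, L x -> R x) /\ left_submodule R L.

Definition nonzero (L : S -> Prop) : Prop := exists2 x, L x & x != 0.

Definition trivial_meet (L L' : S -> Prop) : Prop :=
  forall x, L x -> L' x -> x = 0.

Definition essential_in (R L : S -> Prop) : Prop :=
  left_ideal R L /\
  forall L', left_ideal R L' -> nonzero L' -> ~ trivial_meet L L'.

Definition uniform_in (R L : S -> Prop) : Prop :=
  left_ideal R L /\ nonzero L /\
  forall U V, left_ideal R U -> left_ideal R V ->
    (forall x, U x -> L x) -> (forall x, V x -> L x) ->
    nonzero U -> nonzero V -> ~ trivial_meet U V.

Definition independent (I : Type) (L : I -> S -> Prop) : Prop :=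
  forall (n : nat) (idx : 'I_n -> I) (x : 'I_n -> S),
    injective idx -> (forall k, L (idx k) (x k)) ->
    \sum_(k < n) x k = 0 -> forall k, x k = 0.

(* udim(R) <= |K| : every direct sum of non-zero left ideals of R is
   indexed by a set of cardinality at most |K| *)
Definition udim_le (R : S -> Prop) (K : Type) : Prop :=
  forall (I : Type) (L : I -> S -> Prop),
    (forall i, left_ideal R (L i) /\ nonzero (L i)) -> independent L ->
    exists f : I -> K, injective f.

(* udim(R) = udim(R') as cardinals: they have the same cardinal upper bounds *)
Definition udim_eq (R R' : S -> Prop) : Prop :=
  forall K : Type, udim_le R K <-> udim_le R' K.

Definition singular (R : S -> Prop) (x : S) : Prop :=
  R x /\ exists E, essential_in R E /\ forall e, E e -> e * x = 0.

(* SL: additive subgroup generated by the products s * l, l in L *)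
Definition genS (L : S -> Prop) (x : S) : Prop :=
  exists (n : nat) (s l : 'I_n -> S),
    (forall k, L (l k)) /\ x = \sum_(k < n) s k * l k.

Definition fullset (x : S) : Prop := True.
End Defs.

(* Main.v *)
Require Import Defs.
From mathcomp Require Import all_boot all_order all_algebra.
From Stdlib Require Import Classical IndefiniteDescription.
Import GRing.Theory.
Set Implicit Arguments. Unset Strict Implicit. Unset Printing Implicit Defensive.
Local Open Scope ring_scope.

Section Gen.
Variable S : pzRingType.
Implicit Types (L U V : S -> Prop) (x y : S).

Lemma genS_sub L x : L x -> genS L x.
Proof.
move=> Lx; exists 1%N, (fun _ => 1), (fun _ => x); split=> // .
by rewrite big_ord1 mul1r.
Qed.

Lemma genS_mono U V x : (forall z, U z -> V z) -> genS U x -> genS V x.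
Proof. by move=> UV [n [s [l [Hl ->]]]]; exists n, s, l; split=> // k; apply: UV. Qed.

Lemma genS_ideal L : left_ideal (@fullset S) (genS L).
Proof.
split=> //; split.
  by exists 0%N, (fun _ => 0), (fun _ => 0); split=> [[]//|]; rewrite big_ord0.
split.
  move=> x y [n [s [l [Hl ->]]]] [m [t [u [Hu ->]]]].
  exists (n + m)%N, (fun k => match split k with inl i => s i | inr j => t j end),
    (fun k => match split k with inl i => l i | inr j => u j end).
  split.
    by move=> k; case: (split k).
  rewrite big_split_ord /=.
  by congr (_ + _); apply: eq_bigr => i _;
    rewrite ?(unsplitK (inl _ i)) ?(unsplitK (inr _ i)).
move=> r x _ [n [s [l [Hl ->]]]].
exists n, (fun k => r * s k), l; split=> //.
by rewrite mulr_sumr; apply: eq_bigr => i _; rewrite mulrA.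
Qed.

Lemma genS_nonzero L : nonzero L -> nonzero (genS L).
Proof. by move=> [x Lx nx]; exists x => //; apply: genS_sub. Qed.

Lemma genS_pull (A L : S -> Prop) y : left_submodule A L -> genS L y ->
  exists E : seq S, forall a, (forall e, e \in E -> A (a * e)) -> L (a * y).
Proof.
move=> [L0 [LD LM]] [n [s [l [Hl ->]]]].
exists (map s (enum 'I_n)) => a Ha.
rewrite mulr_sumr; apply: (big_ind L) => // i _.
rewrite mulrA; apply: LM => //; apply: Ha.
by apply: map_f; rewrite mem_enum.
Qed.

Lemma not_tm U V : ~ trivial_meet U V -> exists x, U x /\ V x /\ x != 0.
Proof.
move=> H; apply: NNPP => H2; apply: H; rewrite /trivial_meet => x Ux Vx.
apply: NNPP => nx; apply: H2; exists x; do 2 split=> //; exact/eqP.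
Qed.

Lemma tm_not U V x : U x -> V x -> x != 0 -> ~ trivial_meet U V.
Proof. by move=> Ux Vx nx T; move: nx; rewrite (T x Ux Vx) eqxx. Qed.

End Gen.

Section Sub.
Variable S : pzRingType.
Variable R : S -> Prop.
Hypothesis hR : is_subring R.
Implicit Types (L U V E : S -> Prop) (x y : S).

Lemma R0 : R 0.
Proof. by case: hR => R1 [RB _]; rewrite -(subrr 1); apply: RB. Qed.

Lemma RN x : R x -> R (- x).
Proof. by case: hR => _ [RB _] Rx; rewrite -sub0r; apply: RB => //; apply: R0. Qed.

Lemma RD x y : R x -> R y -> R (x + y).
Proof. by case: hR => _ [RB _] Rx Ry; rewrite -(opprK y); apply: RB => //; apply: RN. Qed.

Lemma RM x y : R x -> R y -> R (x * y).
Proof. by case: hR => _ [_ RM']; apply: RM'. Qed.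

Lemma ess_R : essential_in R R.
Proof.
split.
  split=> //; split; first exact: R0.
  by split; [apply: RD | move=> r x; apply: RM].
move=> L' [LR _] [x Lx nx]; exact: (@tm_not S R L' x (LR x Lx) Lx nx).
Qed.

Lemma ess_I E1 E2 : essential_in R E1 -> essential_in R E2 ->
  essential_in R (fun x => E1 x /\ E2 x).
Proof.
move=> [[E1R [E10 [E1D E1M]]] H1] [[E2R [E20 [E2D E2M]]] H2].
split.
  split; first by move=> x [/E1R].
  split; first by [].
  split; first by move=> x y [? ?] [? ?]; split; [apply: E1D|apply: E2D].
  by move=> r x Rr [? ?]; split; [apply: E1M|apply: E2M].
move=> L' [L'R [L'0 [L'D L'M]]] nL'.
have [x [E1x [L'x nx]]] := not_tm (H1 L' (conj L'R (conj L'0 (conj L'D L'M))) nL').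
have IL : left_ideal R (fun z => E1 z /\ L' z).
  split; first by move=> z [/E1R].
  split; first by [].
  split; first by move=> z w [? ?] [? ?]; split; [apply: E1D|apply: L'D].
  by move=> r z Rr [? ?]; split; [apply: E1M|apply: L'M].
have [y [E2y [[E1y L'y] ny]]] := not_tm (H2 _ IL (ex_intro2 _ _ x (conj E1x L'x) nx)).
exact: (tm_not (conj E1y E2y) L'y ny).
Qed.

Lemma ess_M E r : essential_in R E -> R r ->
  essential_in R (fun e => R e /\ E (e * r)).
Proof.
move=> [[ER [E0 [ED EM]]] H] Rr.
split.
  split; first by move=> x [].
  split; first by split; [apply: R0 | rewrite mul0r].
  split; first by move=> x y [? ?] [? ?]; split; [apply: RD|rewrite mulrDl; apply: ED].
  by move=> t x Rt [? ?]; split; [apply: RM|rewrite -mulrA; apply: EM].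
move=> L' [L'R [L'0 [L'D L'M]]] [l0 Ll0 nl0].
case: (classic (exists l, L' l /\ l * r != 0)) => [[l [Ll nlr]]|Hn].
  pose M z := exists l, L' l /\ z = l * r.
  have IM : left_ideal R M.
    split; first by move=> z [l' [Ll' ->]]; apply: RM => //; apply: L'R.
    split; first by exists 0; rewrite mul0r.
    split.
      by move=> z w [l1 [? ->]] [l2 [? ->]]; exists (l1 + l2); rewrite mulrDl; split=> //; apply: L'D.
    by move=> t z Rt [l1 [? ->]]; exists (t * l1); rewrite mulrA; split=> //; apply: L'M.
  have [z [Ez [[l1 [Ll1 Hz]] nz]]] := not_tm (H M IM (ex_intro2 _ _ (l * r) (ex_intro _ l (conj Ll erefl)) nlr)).
  subst z.
  have nl1 : l1 != 0 by apply: contraNneq nz => ->; rewrite mul0r.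
  exact: (@tm_not _ (fun e => R e /\ E (e * r)) L' l1 (conj (L'R _ Ll1) Ez) Ll1 nl1).
have h0 : l0 * r = 0.
  by apply/eqP; apply: NNPP => h; apply: Hn; exists l0; split=> //; apply/negP.
have E0' : E (l0 * r) by rewrite h0.
exact: (@tm_not _ (fun e => R e /\ E (e * r)) L' l0 (conj (L'R _ Ll0) E0') Ll0 nl0).
Qed.

Lemma sing_sub : left_submodule R (singular R).
Proof.
split.
  by split; [exact: R0 | exists R; split; [exact: ess_R | move=> e _; rewrite mulr0]].
split.
  move=> x y [Rx [E1 [Ess1 A1]]] [Ry [E2 [Ess2 A2]]]; split; first exact: RD.
  exists (fun x => E1 x /\ E2 x); split; first exact: ess_I.
  by move=> e [? ?]; rewrite mulrDr A1 // A2 // addr0.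
move=> r x Rr [Rx [E [Ess Ann]]]; split; first exact: RM.
exists (fun e => R e /\ E (e * r)); split; first exact: ess_M.
by move=> e [_ h]; rewrite mulrA Ann.
Qed.

End Sub.

Lemma full_sub (S : pzRingType) : is_subring (@fullset S).
Proof. by []. Qed.

Section Nice.
Variable S : pzRingType.
Variable A : S -> Prop.
Hypothesis hA : nicely_essential_subring A.
Implicit Types (L U V E : S -> Prop) (x y : S).

Let hsub : is_subring A := proj1 hA.

Lemma nice_ext (E : seq S) : exists2 a, A a &
  forall x, x \in E -> A (a * x) /\ (x != 0 -> a * x != 0).
Proof.
have hE : forall x, x \in [seq x <- E | x != 0] -> x != 0.
  by move=> x; rewrite mem_filter => /andP[].
have [a Aa Ha] := proj2 hA [seq x <- E | x != 0] hE.
exists a => // x xE; case: (eqVneq x 0) => [->|nx].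
  by rewrite mulr0; split=> //; apply: R0.
by have [] := Ha x; rewrite ?mem_filter ?nx.
Qed.

Lemma nice_pull n (y : 'I_n -> S) (P : 'I_n -> S -> Prop) :
  (forall k, left_submodule A (P k)) -> (forall k, genS (P k) (y k)) ->
  exists2 a, A a & forall k, P k (a * y k) /\ (y k != 0 -> a * y k != 0).
Proof.
move=> HP Hy.
pose F k := proj1_sig (constructive_indefinite_description _ (genS_pull (HP k) (Hy k))).
have HF k : forall a, (forall e, e \in F k -> A (a * e)) -> P k (a * y k).
  exact: (proj2_sig (constructive_indefinite_description _ (genS_pull (HP k) (Hy k)))).
have [a Aa Ha] := nice_ext (flatten [seq F k | k <- enum 'I_n] ++ [seq y k | k <- enum 'I_n]).
exists a => // k; split.
  apply: HF => e eF; apply: (proj1 (Ha e _)); rewrite mem_cat; apply/orP; left.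
  by apply/flatten_mapP; exists k; rewrite ?mem_enum.
apply: (proj2 (Ha _ _)); rewrite mem_cat; apply/orP; right.
by apply: map_f; rewrite mem_enum.
Qed.

Lemma pull2 L1 L2 y1 y2 : left_submodule A L1 -> left_submodule A L2 ->
  genS L1 y1 -> genS L2 y2 ->
  exists2 a, A a & [/\ L1 (a * y1), L2 (a * y2), A (a * y1), (y1 != 0 -> a * y1 != 0)
                    & (y2 != 0 -> a * y2 != 0)].
Proof.
move=> H1 H2 G1 G2.
have [E1 HE1] := genS_pull H1 G1.
have [E2 HE2] := genS_pull H2 G2.
have [a Aa Ha] := nice_ext (E1 ++ E2 ++ [:: y1; y2]).
exists a => //; split.
- by apply: HE1 => e eE; apply: (proj1 (Ha e _)); rewrite !mem_cat eE.
- by apply: HE2 => e eE; apply: (proj1 (Ha e _)); rewrite !mem_cat eE orbT.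
- by apply: (proj1 (Ha _ _)); rewrite !mem_cat !inE eqxx !orbT.
- by apply: (proj2 (Ha _ _)); rewrite !mem_cat !inE eqxx !orbT.
- by apply: (proj2 (Ha _ _)); rewrite !mem_cat !inE eqxx !orbT.
Qed.

Lemma sub_A : left_submodule A A.
Proof. by split; [apply: R0 | split; [apply: RD | move=> r x; apply: RM]]. Qed.

Lemma modI L1 L2 : left_submodule A L1 -> left_submodule A L2 ->
  left_submodule A (fun x => L1 x /\ L2 x).
Proof.
move=> [a0 [aD aM]] [b0 [bD bM]]; split=> //; split.
  by move=> x y [? ?] [? ?]; split; [apply: aD|apply: bD].
by move=> r x Rr [? ?]; split; [apply: aM|apply: bM].
Qed.

Lemma fullmod L : left_ideal (@fullset S) L -> left_submodule A L.
Proof. by move=> [_ [L0 [LD LM]]]; split=> //; split=> // r x _; apply: LM. Qed.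

Lemma idealAI L : left_submodule A L -> left_ideal A (fun x => A x /\ L x).
Proof. by move=> HL; split; [move=> x []|apply: modI => //; apply: sub_A]. Qed.

Lemma nonzero_AI L : left_submodule A L -> nonzero L -> nonzero (fun x => A x /\ L x).
Proof.
move=> [_ [_ LM]] [x Lx nx].
have [a Aa Ha] := nice_ext [:: x].
have [Aax nax] := Ha x (mem_head _ _).
by exists (a * x) => //; [split=> //; apply: LM | apply: nax].
Qed.

Lemma genS_ideal_mod L : left_submodule A (genS L).
Proof. by apply: fullmod; apply: genS_ideal. Qed.

End Nice.

Section Main.
Variable S : pzRingType.
Variable A : S -> Prop.
Hypothesis hA : nicely_essential_subring A.
Implicit Types (L U V E : S -> Prop) (x y : S).
Let hsub : is_subring A := proj1 hA.

Lemma partA1 L L' : left_ideal A L -> left_ideal A L' -> trivial_meet L L' ->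
  trivial_meet (genS L) (genS L').
Proof.
move=> [_ HL] [_ HL'] T x G1 G2.
have [a Aa [h1 h2 _ n1 _]] := pull2 hA HL HL' G1 G2.
apply/eqP; apply: contraT => nx; have := n1 nx; by rewrite (T _ h1 h2) eqxx.
Qed.

Lemma partA2 : udim_eq (@fullset S) A.
Proof.
move=> K; split=> H I L HL Hind.
  apply: (H I (fun i => genS (L i))).
    move=> i; split; [exact: genS_ideal | exact: genS_nonzero (proj2 (HL i))].
  move=> n idx x inj Hx Hsum k.
  have [a Aa Ha] := nice_pull hA (P := fun k => L (idx k))
     (fun k => proj2 (proj1 (HL (idx k)))) Hx.
  have Hz : forall k, a * x k = 0.
    apply: (Hind n idx (fun k => a * x k) inj); first by move=> j; exact (proj1 (Ha j)).
    by rewrite -mulr_sumr Hsum mulr0.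
  apply/eqP; apply: contraT => nk; have := proj2 (Ha k) nk; by rewrite Hz eqxx.
apply: (H I (fun i x => A x /\ L i x)).
  move=> i; have mi := fullmod A (proj1 (HL i)).
  by split; [exact: (idealAI hA mi) | exact: (nonzero_AI hA mi (proj2 (HL i)))].
by move=> n idx x inj Hx; apply: Hind n idx x inj (fun k => proj2 (Hx k)).
Qed.

Lemma partA3 x : singular A x <-> A x /\ singular (@fullset S) x.
Proof.
split.
  move=> [Ax [E [[[ER Emod] Hess] Ann]]]; split=> //; split=> //.
  exists (genS E); split.
    split; first exact: genS_ideal.
    move=> L' IL' nL'.
    have hm := idealAI hA (fullmod A IL'); have nz := nonzero_AI hA (fullmod A IL') nL'.
    have [y [Ey [[Ay L'y] ny]]] := not_tm (Hess _ hm nz).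
    exact: tm_not (genS_sub Ey) L'y ny.
  move=> e [n [s [l [Hl ->]]]]; rewrite mulr_suml; apply: big1 => k _.
  by rewrite -mulrA Ann // mulr0.
move=> [Ax [_ [E [[IE Hess] Ann]]]]; split=> //.
exists (fun x => A x /\ E x); split.
  split; first exact: idealAI (fullmod A IE).
  move=> L' [L'A L'mod] nL'.
  have [y [Ey [Gy ny]]] := not_tm (Hess (genS L') (genS_ideal _) (genS_nonzero nL')).
  have [a Aa [h1 h2 _ n1 _]] := pull2 hA L'mod (fullmod A IE) Gy (genS_sub Ey).
  exact: tm_not (conj (L'A _ h1) h2) h1 (n1 ny).
by move=> e [_ Ee]; exact: Ann.
Qed.

Lemma nonzero_ALU L U : left_submodule A L -> left_ideal (@fullset S) U ->
  (forall x, U x -> genS L x) -> nonzero U -> nonzero (fun x => A x /\ (L x /\ U x)).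
Proof.
move=> Lm IU UL [u Uu nu].
have [a Aa [h1 h2 h3 n1 _]] := pull2 hA Lm (fullmod A IU) (UL u Uu) (genS_sub Uu).
exists (a * u); first by split. by apply: n1.
Qed.

Lemma partB L : left_submodule A L -> nonzero L ->
     (uniform_in A (fun x => A x /\ L x) <-> uniform_in (@fullset S) (genS L)) /\
     (essential_in A (fun x => A x /\ L x) <-> essential_in (@fullset S) (genS L)).
Proof.
move=> Lm nL; split; split.
- move=> [IAL [nAL HU]]; split; first exact: genS_ideal.
  split; first exact: genS_nonzero.
  move=> U V IU IV UL VL nU nV T.
  have IU' := idealAI hA (modI Lm (fullmod A IU)).
  have IV' := idealAI hA (modI Lm (fullmod A IV)).
  apply: (HU _ _ IU' IV') .
  + by move=> x [Ax [Lx _]].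
  + by move=> x [Ax [Lx _]].
  + exact: nonzero_ALU.
  + exact: nonzero_ALU.
  + by move=> x [_ [_ Ux]] [_ [_ Vx]]; exact: T x Ux Vx.
- move=> [IG [nG HU]]; split; first exact: idealAI.
  split; first exact: nonzero_AI.
  move=> U V [UA Um] [VA Vm] UL VL nU nV.
  have [y [GU [GV ny]]] := not_tm (HU (genS U) (genS V) (genS_ideal _) (genS_ideal _)
    (fun z => genS_mono (fun w h => proj2 (UL w h)))
    (fun z => genS_mono (fun w h => proj2 (VL w h)))
    (genS_nonzero nU) (genS_nonzero nV)).
  have [a Aa [h1 h2 _ n1 _]] := pull2 hA Um Vm GU GV.
  exact: tm_not h1 h2 (n1 ny).
- move=> [IAL Hess]; split; first exact: genS_ideal.
  move=> L' IL' nL'.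
  have [y [[Ay Ly] [[_ L'y] ny]]] :=
    not_tm (Hess _ (idealAI hA (fullmod A IL')) (nonzero_AI hA (fullmod A IL') nL')).
  exact: tm_not (genS_sub Ly) L'y ny.
- move=> [IG Hess]; split; first exact: idealAI.
  move=> L' [L'A L'm] nL'.
  have [y [Gy [G'y ny]]] := not_tm (Hess (genS L') (genS_ideal _) (genS_nonzero nL')).
  have [a Aa [h1 h2 _ n1 _]] := pull2 hA Lm L'm Gy G'y.
  exact: tm_not (conj (L'A _ h2) h1) h2 (n1 ny).
Qed.

End Main.

Theorem mainTheorem3 (S : pzRingType) (A : S -> Prop) :
  nicely_essential_subring A ->
  (* (a) *)
  ((forall L L' : S -> Prop, left_ideal A L -> left_ideal A L' ->
      trivial_meet L L' -> trivial_meet (genS L) (genS L')) /\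
   udim_eq (@fullset S) A /\
   (forall x, singular A x <-> A x /\ singular (@fullset S) x) /\
   (left_submodule A (singular A) /\
    (forall x, singular A x -> singular (@fullset S) x) /\
    forall E : seq S, (forall x, x \in E -> x != 0 /\ singular (@fullset S) x) ->
      exists2 a, A a & forall x, x \in E -> a * x != 0 /\ singular A (a * x))) /\
  (* (b) *)
  (forall L : S -> Prop, left_submodule A L -> nonzero L ->
     (uniform_in A (fun x => A x /\ L x) <-> uniform_in (@fullset S) (genS L)) /\
     (essential_in A (fun x => A x /\ L x) <-> essential_in (@fullset S) (genS L))).
Proof.
move=> hA; split; last exact: partB.
split; first exact: partA1.
split; first exact: partA2.
split; first exact: partA3.
split; first exact: sing_sub (proj1 hA).
split; first by move=> x /(partA3 hA) [].
move=> E HE.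
have [a Aa Ha] := nice_ext hA E.
exists a => // x xE; have [nx sx] := HE x xE; have [Aax nax] := Ha x xE.
split; first exact: nax.
apply/(partA3 hA); split=> //.
have [_ [_ SM]] := sing_sub (full_sub S).
exact: SM.
Qed.
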